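(* Suppose $n$ is even and $T\in SO(n)$. Suppose the minimal polynomial of $T$ is a power of an irreducible quadratic polynomial over $\mathbb R$. Then $T$ is real in $SO(n)$ if and only if $n\not\equiv 2\pmod 4$.
   Context: An element $g$ of a group $G$ is real in $G$ if there is $h\in G$ with $hgh^{-1}=g^{-1}$. *)

(* Defs.v *)
From mathcomp Require Import all_boot all_order all_algebra.
From mathcomp Require Import reals.
Set Implicit Arguments. Unset Strict Implicit. Unset Printing Implicit Defensive.
Import Order.TTheory GRing.Theory Num.Theory.
Local Open Scope ring_scope.

Definition in_SO (R : realType) (n : nat) (A : 'M[R]_n) : Prop :=
  A *m A^T = 1%:M /\ \det A = 1.

Definition real_in_SO (R : realType) (n : nat) (g : 'M[R]_n) : Prop :=
  exists h : 'M[R]_n, in_SO h /\ h *m g *m invmx h = invmx g.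

(* Main.v *)
Require Import Defs.
From mathcomp Require Import all_boot all_order all_algebra.
From mathcomp Require Import reals.
From mathcomp Require Import complex ring lra zify.
Set Implicit Arguments. Unset Strict Implicit. Unset Printing Implicit Defensive.
Import Order.TTheory GRing.Theory Num.Theory.
Local Open Scope ring_scope.

Section S.
Variable R : realType.

Lemma mxtr_eq0 p q (Z : 'M[R]_(p, q)) : Z *m Z^T = 0 -> Z = 0.
Proof.
move=> H; apply/matrixP => i j; rewrite mxE.
have := congr1 (fun M : 'M[R]_p => M i i) H; rewrite !mxE => /psumr_eq0P Hs.
have : Z i j * Z^T j i = 0 by apply: Hs => // k _; rewrite mxE -expr2 sqr_ge0.
by rewrite mxE => /eqP; rewrite mulf_eq0 orbb => /eqP.
Qed.

Lemma normal_step n p (N : 'M[R]_n) (X : 'M[R]_(n, p)) :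
  N *m N^T = N^T *m N -> N *m (N *m X) = 0 -> N *m X = 0.
Proof.
move=> HN; set Y := N *m X => HY.
have H1 : (Y^T *m N) *m (Y^T *m N)^T = 0.
  by rewrite [(Y^T *m N)^T]trmx_mul trmxK -mulmxA (mulmxA N (N^T) Y) HN -!mulmxA HY !mulmx0.
have H2 : N^T *m Y = 0 by rewrite -(trmxK (N^T *m Y)) trmx_mul trmxK (mxtr_eq0 H1) trmx0.
have H3 : Y^T *m Y^T^T = 0 by rewrite trmxK {1}/Y trmx_mul -mulmxA H2 mulmx0.
by rewrite -(trmxK Y) (mxtr_eq0 H3) trmx0.
Qed.

Lemma normal_nil n (N : 'M[R]_n.+1) k :
  N *m N^T = N^T *m N -> N ^+ k.+1 = 0 -> N = 0.
Proof.
move=> HN; elim: k => [|k IH]; first by rewrite expr1.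
move=> Hk; apply: IH.
rewrite exprS; apply: (normal_step HN).
by move: Hk; rewrite !exprS.
Qed.


Lemma skew11 (J : 'M[R]_1) : J^T = - J -> J = 0.
Proof.
move=> H; have e := congr1 (fun M : 'M[R]_1 => M 0 0) H; rewrite /= !mxE in e.
by apply/matrixP => i j; rewrite !ord1 mxE; lra.
Qed.

Lemma exU m (J : 'M[R]_(m+m)) : J^T = -J -> forall k, (k <= m)%N ->
  exists U : 'M[R]_(k, m+m), U *m U^T = 1%:M /\ U *m J *m U^T = 0.
Proof.
move=> HJ; elim=> [|k IH] Hk.
  by exists 0; split; apply/matrixP => -[i Hi].
have [U [HU1 HU2]] := IH (ltnW Hk).
set B := (col_mx U (U *m J))^T.
have rB : (\rank B <= k + k)%N by rewrite mxrank_tr; apply: rank_leq_row.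
have hK : kermx B != 0.
  rewrite -mxrank_eq0 mxrank_ker; apply/eqP => h.
  have : (m + m <= \rank B)%N by rewrite -subn_eq0 h.
  move: rB Hk; clear; lia.
set x := nz_row (kermx B).
have hx : x != 0 by rewrite nz_row_eq0.
have hxB : x *m B = 0.
  have /submxP [w hw] := nz_row_sub (kermx B); by rewrite /x hw -mulmxA mulmx_ker mulmx0.
move: hxB; rewrite /B tr_col_mx mul_mx_row => /eqP; rewrite row_mx_eq0 => /andP[/eqP hx1 /eqP hx2].
have hx3 : x *m J *m U^T = 0.
  move: hx2; rewrite trmx_mul HJ mulNmx mulmxN mulmxA => /eqP; rewrite oppr_eq0.
  by move/eqP.
set r := (x *m x^T) 0 0.
have hr0 : 0 <= r by rewrite /r mxE; apply: sumr_ge0 => j _; rewrite mxE -expr2 sqr_ge0.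
have hr : 0 < r.
  rewrite lt_def hr0 andbT; apply/eqP => h.
  move/eqP: hx; apply; apply: mxtr_eq0.
  by apply/matrixP => i j; rewrite !ord1 [RHS]mxE -h.
set y := (Num.sqrt r)^-1 *: x.
have hy : y *m y^T = 1%:M.
  rewrite /y linearZ /= -scalemxAl -scalemxAr scalerA (mx11_scalar (x *m x^T)) -/r.
  rewrite scale_scalar_mx -invfM -expr2 sqr_sqrtr ?mulVf //.
  by rewrite gt_eqF.
have hy1 : y *m U^T = 0 by rewrite /y -scalemxAl hx1 scaler0.
have hy2 : y *m J *m U^T = 0 by rewrite /y -!scalemxAl hx3 scaler0.
have hy3 : y *m J *m y^T = 0.
  by apply: skew11; rewrite !trmx_mul trmxK HJ mulNmx mulmxN mulmxA.
have hy4 : U *m y^T = 0 by rewrite -(trmxK (U *m y^T)) trmx_mul trmxK hy1 trmx0.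
have hy5 : U *m J *m y^T = 0.
  rewrite (_ : U *m J *m y^T = (y *m J^T *m U^T)^T); last by rewrite !trmx_mul !trmxK mulmxA.
  by rewrite HJ mulmxN mulNmx hy2 oppr0 trmx0.
have h1 : col_mx y U *m (col_mx y U)^T = 1%:M.
  by rewrite tr_col_mx mul_col_row hy hy1 hy4 HU1 -scalar_mx_block.
have h2 : col_mx y U *m J *m (col_mx y U)^T = 0.
  by rewrite tr_col_mx mul_col_mx mul_col_row hy3 hy2 hy5 HU2 block_mx0.
by exists (col_mx y U).
Qed.


Lemma det_cplx_ge0 m (a b : 'M[R]_m) : 0 <= \det (block_mx a b (-b) a).
Proof.
set M := block_mx a b (-b) a.
rewrite -(@lecR R) -(det_map_mx (real_complex R)).
rewrite /M map_block_mx map_mxN.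
set A := map_mx _ a; set B := map_mx _ b.
pose c : R[i] := 'i%C.
pose X := block_mx (1%:M : 'M[R[i]]_m) 0 (c%:M) 1%:M.
pose Y := block_mx (1%:M : 'M[R[i]]_m) 0 ((-c)%:M) 1%:M.
have hX : \det X = 1 by rewrite det_lblock !det1 mulr1.
have hY : \det Y = 1 by rewrite det_lblock !det1 mulr1.
have E : X *m block_mx A B (-B) A *m Y = block_mx (A - c *: B) B 0 (A + c *: B).
  rewrite /X /Y !mulmx_block !mul1mx !mul0mx !mulmx0 !mulmx1 !add0r !addr0 !mul_scalar_mx.
  congr block_mx; rewrite ?mulmx1 ?mul1mx.
  - by rewrite mul_mx_scalar scaleNr.
  - rewrite mulmxDl !mul_mx_scalar scalerA mulNr -expr2 /c sqr_i opprK scale1r scaleNr.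
    by rewrite -(opprB ('i%C *: A) B) subrr.
  - by rewrite addrC.
have E2 : \det (block_mx A B (-B) A) = \det (A - c *: B) * \det (A + c *: B).
  by rewrite -(det_ublock _ B) -E !det_mulmx hX hY mul1r mulr1.
have E3 : A + c *: B = map_mx conjc (A - c *: B).
  apply/matrixP => i j; rewrite !mxE.
  by rewrite /c; simpc; rewrite /= opprK.
have -> : \det (block_mx A B (-B) A) = \det (A - c *: B) * \det (A + c *: B) by [].
rewrite E3 det_map_mx /=.
by rewrite (rmorph0 (real_complex R)) mul_conjC_ge0.
Qed.

Lemma core m (J : 'M[R]_(m+m)) : J^T = -J -> J *m J = -1%:M ->
  (exists h : 'M[R]_(m+m), h *m h^T = 1%:M /\ \det h = 1 /\ h *m J *m h^T = -J)
  <-> ~~ odd m.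
Proof.
move=> HJ HJJ.
have [U [HU1 HU2]] := exU HJ (leqnn m).
set P := col_mx U (U *m J).
have UJUt : U *m (U *m J)^T = 0.
  by rewrite trmx_mul HJ mulNmx mulmxN mulmxA HU2 oppr0.
have JJt : J *m J^T = 1%:M by rewrite HJ mulmxN HJJ opprK.
have UJJ : U *m J *m J = - U by rewrite -mulmxA HJJ mulmxN mulmx1.
have HP : P *m P^T = 1%:M.
  rewrite /P tr_col_mx mul_col_row HU1 HU2 UJUt.
  by rewrite trmx_mul mulmxA -(mulmxA U J) JJt mulmx1 HU1 -scalar_mx_block.
set J0 : 'M[R]_(m+m) := block_mx 0 1%:M (-1%:M) 0.
have HPJ : P *m J *m P^T = J0.
  rewrite /P mul_col_mx UJJ tr_col_mx mul_col_row HU2 mulNmx mulNmx HU1 UJUt oppr0.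
  by rewrite trmx_mul mulmxA -(mulmxA U J) JJt mulmx1 HU1.
have HPt : P^T *m P = 1%:M by apply: mulmx1C.
have HJe : J = P^T *m J0 *m P.
  by rewrite -HPJ !mulmxA HPt mul1mx -mulmxA HPt mulmx1.
set D : 'M[R]_(m+m) := block_mx 1%:M 0 0 (-1%:M).
have DJ0 : D *m J0 = - (J0 *m D).
  rewrite /D /J0 !mulmx_block !mul0mx !mulmx0 !mul1mx !mulmx1 !mulNmx !mulmxN !mul1mx.
  by rewrite opp_block_mx !addr0 !add0r !oppr0 !opprK.
have DD : D *m D = 1%:M.
  rewrite /D !mulmx_block !mul0mx !mulmx0 !mul1mx mulNmx mulmxN mul1mx opprK.
  by rewrite !addr0 !add0r -scalar_mx_block.
have Dt : D^T = D.
  by rewrite /D tr_block_mx !trmx0 linearN /= !tr_scalar_mx.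
have detD : \det D = (-1) ^+ m.
  by rewrite /D det_lblock det1 mul1r -scaleN1r detZ det1 mulr1.
have detP : \det P * \det P = 1.
  by rewrite -{2}det_tr -det_mulmx HP det1.
have cP : forall p (X : 'M_(p, m+m)), X *m P^T *m P = X.
  by move=> p X; rewrite -mulmxA HPt mulmx1.
have cP' : forall p (X : 'M_(p, m+m)), X *m P *m P^T = X.
  by move=> p X; rewrite -mulmxA HP mulmx1.
have cD : forall p (X : 'M_(p, m+m)), X *m D *m D = X.
  by move=> p X; rewrite -mulmxA DD mulmx1.
have eJ : forall p (X : 'M_(p, m+m)), X *m P^T *m J0 *m P = X *m J.
  by move=> p X; rewrite HJe !mulmxA.
have eJ0 : forall p (X : 'M_(p, m+m)), X *m P *m J *m P^T = X *m J0.
  by move=> p X; rewrite -HPJ !mulmxA.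
have eD : forall p (X : 'M_(p, m+m)), X *m D *m J0 = - (X *m J0 *m D).
  by move=> p X; rewrite -mulmxA DJ0 mulmxN mulmxA.
split.
- move=> [h [Hh [dh HhJ]]].
  have ch : forall p (X : 'M_(p, m+m)), X *m h *m h^T = X.
    by move=> p X; rewrite -mulmxA Hh mulmx1.
  have ehJ : forall p (X : 'M_(p, m+m)), X *m h *m J *m h^T = - (X *m J).
    by move=> p X; rewrite -mulmxN -HhJ !mulmxA.
  set h0 := P *m h *m P^T.
  have Hh0 : h0 *m h0^T = 1%:M.
    by rewrite /h0 !trmx_mul trmxK !mulmxA cP ch HP.
  have h0J0 : h0 *m J0 *m h0^T = -J0.
    by rewrite /h0 !trmx_mul trmxK !mulmxA eJ ehJ mulNmx HPJ.
  have Ht0 : h0^T *m h0 = 1%:M by apply: mulmx1C.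
  have h0J : h0 *m J0 = - (J0 *m h0).
    by rewrite -{1}(mulmx1 (h0 *m J0)) -Ht0 !mulmxA h0J0 !mulNmx.
  have dh0 : \det h0 = 1 by rewrite /h0 !det_mulmx det_tr dh mulr1.
  set c := h0 *m D.
  have cJ : c *m J0 = J0 *m c.
    by rewrite /c eD h0J mulNmx opprK mulmxA.
  have dc : \det c = (-1) ^+ m by rewrite det_mulmx dh0 mul1r detD.
  move: cJ dc; rewrite -(submxK c) /J0 !mulmx_block.
  rewrite !mulmxN !mulNmx !mulmx0 !mul0mx !mulmx1 !mul1mx !addr0 !add0r ?oppr0.
  move=> /eq_block_mx [e1 e2 e3 e4]; rewrite -e1 -e2 => dc.
  have := det_cplx_ge0 (ulsubmx c) (ursubmx c); rewrite dc -signr_odd.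
  by case: (odd m) => //=; rewrite expr1 ler0N1.
- move=> hm; exists (P^T *m D *m P); split.
    by rewrite !trmx_mul trmxK Dt !mulmxA cP' cD HPt.
  split.
    by rewrite !det_mulmx det_tr detD -signr_odd (negbTE hm) expr0 mulr1 mulrC.
  by rewrite !trmx_mul trmxK Dt !mulmxA eJ0 eD !mulNmx cD HJe.
Qed.


Lemma core' N (J : 'M[R]_N) : ~~ odd N -> J^T = -J -> J *m J = -1%:M ->
  (exists h : 'M[R]_N, h *m h^T = 1%:M /\ \det h = 1 /\ h *m J *m h^T = -J)
  <-> (N %% 4 != 2)%N.
Proof.
move=> hN; have [m hm] : exists m, N = (m + m)%N.
  by exists N./2; rewrite addnn -{1}(odd_double_half N) (negbTE hN).
subst N => HJ HJJ; rewrite (core HJ HJJ).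
have -> : ((m + m) %% 4 = 2 * (m %% 2))%N by lia.
by rewrite modn2; case: (odd m).
Qed.

Lemma inv_orth n (A : 'M[R]_n) : A *m A^T = 1%:M -> invmx A = A^T.
Proof.
move=> H; have [uA _] := mulmx1_unit H.
by rewrite -[invmx A]mulmx1 -H mulmxA mulVmx // mul1mx.
Qed.

Lemma noroot (q : {poly R}) x : irreducible_poly q -> size q = 3%N -> ~~ root q x.
Proof.
move=> [_ Hi] sq; apply/negP => rt.
have d : ('X - x%:P) %| q by rewrite dvdp_XsubCl.
have := Hi _ _ d; rewrite size_XsubC => /(_ isT) /eqp_size.
by rewrite size_XsubC sq.
Qed.

End S.

Theorem lemma3p3 (R : realType) (n' : nat) (T : 'M[R]_n'.+1) :
  ~~ odd n'.+1 ->
  in_SO T ->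
  (exists (q : {poly R}) (k : nat),
      size q = 3%N /\ irreducible_poly q /\ mxminpoly T = q ^+ k) ->
  (real_in_SO T <-> (n'.+1 %% 4 != 2)%N).
Proof.
move=> hev [HT dT] [q [k [sq [iq hmin]]]].
have HTt : T^T *m T = 1%:M by apply: mulmx1C.
have [k' hk] : exists k', k = k'.+1.
  case: k hmin => [|k'] hmin; last by exists k'.
  have := mx_root_minpoly T; rewrite hmin expr0 rmorph1 => /eqP.
  by rewrite oner_eq0.
subst k.
set N := horner_mx T q.
have cTT : comm_mx T T^T by rewrite /comm_mx HT HTt.
have cNTt : comm_mx N T^T by apply: comm_horner_mx.
have cTNt : comm_mx T N^T.
  by move: cNTt; rewrite /comm_mx => /(congr1 trmx); rewrite !trmx_mul trmxK.
have cNNt : comm_mx N N^T by apply: comm_horner_mx.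
have NK : N ^+ k'.+1 = 0.
  by rewrite /N -rmorphXn -hmin; apply: mx_root_minpoly.
have N0 : N = 0 by apply: (normal_nil _ NK).
set a := q`_2; set b := q`_1; set c := q`_0.
have qE : q = a%:P * 'X^2 + b%:P * 'X + c%:P.
  apply/polyP => -[|[|[|i]]]; rewrite !coefD !coefCM coefXn coefX coefC /=;
    rewrite ?mulr0 ?mulr1 ?add0r ?addr0 //.
  by rewrite nth_default // sq.
have ha : a != 0.
  by rewrite /a -[2%N]/(3.-1)%N -sq -lead_coefE lead_coef_eq0 -size_poly_eq0 sq.
have E0 : a *: (T *m T) + b *: T + c%:M = 0.
  move: N0; rewrite /N qE !rmorphD !rmorphM /= !horner_mx_C !horner_mx_X.
  by rewrite -!mulmxE !mul_scalar_mx.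
have E1 : a *: T + b%:M + c *: T^T = 0.
  have := congr1 (mulmx^~ T^T) E0; rewrite /= mul0mx !mulmxDl -!scalemxAl -mulmxA HT.
  by rewrite mulmx1 mul_scalar_mx scalemx1.
have E2 : a *: T^T + b%:M + c *: T = 0.
  by have := congr1 trmx E1; rewrite !linearD !linearZ /= tr_scalar_mx trmxK trmx0.
have E3 : (a - c) *: (T - T^T) = 0.
  apply/matrixP => i j; move: (congr1 (fun M : 'M_n'.+1 => M i j) E1).
  move: (congr1 (fun M : 'M_n'.+1 => M i j) E2); rewrite /= !mxE => e2 e1.
  have -> : (a - c) * (T i j - T j i) = (a * T i j + b *+ (i == j) + c * T j i)
     - (a * T j i + b *+ (i == j) + c * T i j) by ring.
  by rewrite e1 e2 subrr.
have ac : a = c.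
  case: (eqVneq a c) => // nac.
  have hTT : T = T^T.
    by move: E3 => /eqP; rewrite scaler_eq0 !subr_eq0 (negbTE nac) /= => /eqP.
  have H2 : horner_mx T ('X^2 - 1) = 0.
    rewrite rmorphB rmorphXn /= horner_mx_X rmorph1 expr2 -mulmxE.
    by rewrite {2}hTT HT subrr.
  have dq : q %| 'X^2 - 1.
    apply: dvdp_trans (mxminpoly_min H2); by rewrite hmin exprS dvdp_mulr.
  have := dvdp_size_eqp dq; rewrite sq size_Xn_sub_1 // eqxx => /esym eqq.
  have := noroot 1 iq sq; rewrite (eqp_root eqq) rootE !hornerE expr1n subrr eqxx.
  by [].
rewrite -ac in E1 E0 qE.
set g := - (b / (a *+ 2)).
have hb : b = - (a * (g *+ 2)).
  by rewrite /g; field.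
have hTt : T^T = (g *+ 2)%:M - T.
  apply/matrixP => i j; have e1 := congr1 (fun M : 'M_n'.+1 => M i j) E1.
  rewrite /= !mxE in e1 *; apply: (mulfI ha).
  have : a * T j i - a * ((g *+ 2) *+ (i == j) - T i j) =
    a * T i j + b *+ (i == j) + a * T j i by rewrite hb; ring.
  by rewrite e1 => /eqP; rewrite subr_eq0 => /eqP.
have hg : g ^+ 2 < 1.
  rewrite ltNge; apply/negP => hge.
  set d := Num.sqrt (g ^+ 2 - 1).
  have hd : d ^+ 2 = g ^+ 2 - 1 by rewrite sqr_sqrtr // subr_ge0.
  apply: (negP (noroot (g + d) iq sq)).
  rewrite rootE qE !hornerE hb; apply/eqP.
  transitivity (a * (d ^+ 2 - (g ^+ 2 - 1))); first by rewrite /=; ring.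
  by rewrite hd subrr mulr0.
set K := T - g%:M.
have hKt : K^T = - K.
  apply/matrixP => i j; have e := congr1 (fun M : 'M_n'.+1 => M i j) hTt.
  rewrite /= !mxE in e *; rewrite e (eq_sym j i); ring.
have E0' : T *m T = (g *+ 2) *: T - 1%:M.
  apply: (scalerI ha); move/eqP: E0; rewrite -addrA addr_eq0 => /eqP ->.
  by apply/matrixP => i j; rewrite !mxE hb; ring.
have hKK : K *m K = (g ^+ 2 - 1)%:M.
  rewrite /K mulmxBl !mulmxBr mul_mx_scalar mul_scalar_mx -scalar_mxM E0'.
  by apply/matrixP => i j; rewrite !mxE; ring.
set s := Num.sqrt (1 - g ^+ 2).
have hs : 0 < s by rewrite sqrtr_gt0 subr_gt0.
have hs0 : s != 0 by rewrite gt_eqF.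
have hs2 : s ^+ 2 = 1 - g ^+ 2 by rewrite sqr_sqrtr // subr_ge0 ltW.
set J := s^-1 *: K.
have hJt : J^T = - J by rewrite /J linearZ /= hKt scalerN.
have hJJ : J *m J = - 1%:M.
  rewrite /J -scalemxAl -scalemxAr scalerA hKK scale_scalar_mx.
  rewrite (_ : g ^+ 2 - 1 = - s ^+ 2); last by rewrite hs2 opprB.
  apply/matrixP => i j; rewrite !mxE; case: (i == j); rewrite /= ?mulr1n ?mulr0n ?oppr0 //; by field.
have sJ : s *: J = K by rewrite /J scalerA mulfV // scale1r.
have hT1 : T = g%:M + s *: J by rewrite sJ /K addrC subrK.
have hT2 : T^T = g%:M - s *: J.
  rewrite sJ hTt /K; apply/matrixP => i0 j0; rewrite !mxE; ring.
rewrite -(core' hev hJt hJJ).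
have key : forall h : 'M_n'.+1, h *m h^T = 1%:M ->
    (h *m T *m invmx h = invmx T) <-> (h *m J *m h^T = - J).
  move=> h Hh; rewrite (inv_orth Hh) (inv_orth HT) hT2 {1}hT1.
  rewrite mulmxDr mulmxDl mul_mx_scalar -scalemxAl Hh scalemx1.
  rewrite -scalemxAr -scalemxAl -scalerN; split.
    by move/addrI/(scalerI hs0).
  by move=> ->.
split.
  by move=> [h [[Hh dh] HhT]]; exists h; split => //; split => //; apply/key.
by move=> [h [Hh [dh HhJ]]]; exists h; split => //; apply/key.
Qed.
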